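(* Let $A\subset\mathcal L$ with $|A|=M$, $1\le M<N$, and let $U$ be an $N\times N$ unitary matrix with entries $U_{y,z}=\frac{1}{\sqrt N}\alpha(y,z)$. Let $\xi(z)=\frac{1}{\sqrt N}(-1)^{\mathbf 1_A(z)}$ and let $\psi_k$ be the amplified state described in the context. Fix $y$ with $\sum_{z=0}^{N-1}\alpha(y,z)=0$ and $\sum_{z\in A}\alpha(y,z)\neq0$. Then $$\frac{(U\psi_k)(y)}{(U\xi)(y)}=-\frac{N}{2M}\tan\theta\,\sin(2k\theta),\qquad\text{so}\qquad \frac{|(U\psi_k)(y)|^2}{|(U\xi)(y)|^2}=\frac{N^2}{4M^2}\tan^2\theta\sin^2(2k\theta),$$ and if moreover $M\le N/2$ this ratio lies between $\frac{N}{4M}\frac{N}{N-M}(1-\frac{2M}{N})^2$ and $\frac{N}{4M}\frac{N}{N-M}$.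
   Context: $\mathcal L=\{0,1,\dots,N-1\}$, $N\ge2$. $\theta\in(0,\pi/2)$ with $\sin\theta=\sqrt{M/N}$, $k=\lfloor\pi/(4\theta)\rfloor$, $a_k=\frac{\sin((2k+1)\theta)}{\sqrt M}$, $b_k=\frac{\cos((2k+1)\theta)}{\sqrt{N-M}}$, and $\psi_k(z)=a_k$ for $z\in A$, $\psi_k(z)=b_k$ for $z\notin A$. $\mathbf 1_A$ is the indicator function of $A$. *)

(* Defs.v *)
From Stdlib Require Import Reals Lra ZArith.
Open Scope R_scope.

Definition Cplx : Type := (R * R)%type.
Definition RtoC (x : R) : Cplx := (x, 0).
Definition C0 : Cplx := (0, 0).
Definition C1 : Cplx := (1, 0).
Definition Cplus (u v : Cplx) : Cplx := (fst u + fst v, snd u + snd v).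
Definition Cmult (u v : Cplx) : Cplx :=
  (fst u * fst v - snd u * snd v, fst u * snd v + snd u * fst v).
Definition Cconj (u : Cplx) : Cplx := (fst u, - snd u).
Definition Cnorm2 (u : Cplx) : R := fst u * fst u + snd u * snd u.
Definition Cinv (u : Cplx) : Cplx := (fst u / Cnorm2 u, - snd u / Cnorm2 u).
Definition Cdiv (u v : Cplx) : Cplx := Cmult u (Cinv v).

Fixpoint Csum (n : nat) (f : nat -> Cplx) : Cplx :=
  match n with
  | O => C0
  | S m => Cplus (Csum m f) (f m)
  end.

(* Subsets A of L = {0,...,N-1} are boolean predicates on nat (only values < N matter). *)
Fixpoint card_below (n : nat) (A : nat -> bool) : nat :=
  match n with
  | O => O
  | S m => (card_below m A + (if A m then 1 else 0))%nat
  end.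

Definition ind (A : nat -> bool) (z : nat) : nat := if A z then 1%nat else 0%nat.

Definition Umat (N : nat) (alpha : nat -> nat -> Cplx) (y z : nat) : Cplx :=
  Cmult (RtoC (/ sqrt (INR N))) (alpha y z).

Definition unitary (N : nat) (U : nat -> nat -> Cplx) : Prop :=
  (forall y y', (y < N)%nat -> (y' < N)%nat ->
     Csum N (fun z => Cmult (U y z) (Cconj (U y' z))) = if Nat.eqb y y' then C1 else C0) /\
  (forall z z', (z < N)%nat -> (z' < N)%nat ->
     Csum N (fun y => Cmult (Cconj (U y z)) (U y z')) = if Nat.eqb z z' then C1 else C0).

Definition apply (N : nat) (U : nat -> nat -> Cplx) (v : nat -> Cplx) (y : nat) : Cplx :=
  Csum N (fun z => Cmult (U y z) (v z)).

(* k = floor(pi / (4 theta));  Int_part is the floor function of Stdlib *)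
Definition kk (theta : R) : nat := Z.to_nat (Int_part (PI / (4 * theta))).

Definition a_k (M : nat) (theta : R) (k : nat) : R :=
  sin ((2 * INR k + 1) * theta) / sqrt (INR M).
Definition b_k (N M : nat) (theta : R) (k : nat) : R :=
  cos ((2 * INR k + 1) * theta) / sqrt (INR (N - M)).

Definition psi_k (N M : nat) (A : nat -> bool) (theta : R) (k : nat) (z : nat) : Cplx :=
  RtoC (if A z then a_k M theta k else b_k N M theta k).

Definition xi (N : nat) (A : nat -> bool) (z : nat) : Cplx :=
  RtoC (/ sqrt (INR N) * (-1) ^ (ind A z)).

(* Main.v *)
Require Import Defs.
From Stdlib Require Import Reals ZArith Lra Psatz.
Open Scope R_scope.

Lemma Csum_lin (n : nat) (A : nat -> bool) (f : nat -> Cplx) (c p q : R) :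
  Csum n (fun z => Cmult (Cmult (RtoC c) (f z)) (RtoC (if A z then p else q))) =
  Cmult (RtoC c) (Cplus (Cmult (RtoC (p - q)) (Csum n (fun z => if A z then f z else C0)))
                        (Cmult (RtoC q) (Csum n f))).
Proof.
  induction n as [|n IH]; simpl.
  - unfold Cmult, Cplus, RtoC, C0; simpl; f_equal; ring.
  - rewrite IH. destruct (A n); unfold Cmult, Cplus, RtoC, C0; simpl; f_equal; ring.
Qed.

Lemma Csum_ext (n : nat) (f g : nat -> Cplx) : (forall z, f z = g z) -> Csum n f = Csum n g.
Proof. intros H; induction n; simpl; [reflexivity| rewrite IHn, H; reflexivity]. Qed.

Lemma Cdiv_real (r s : R) (S : Cplx) : S <> C0 -> s <> 0 ->
  Cdiv (Cmult (RtoC r) S) (Cmult (RtoC s) S) = RtoC (r / s).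
Proof.
  destruct S as [x y]; intros HS Hs.
  assert (Hn : 0 < x * x + y * y).
  { destruct (Req_dec x 0); destruct (Req_dec y 0); subst; try (exfalso; apply HS; reflexivity); nra. }
  assert (Hs2 : 0 < s * s) by nra.
  assert (Hp : 0 < s * x * (s * x) + s * y * (s * y)).
  { replace (s * x * (s * x) + s * y * (s * y)) with ((s * s) * (x * x + y * y)) by ring. nra. }
  unfold Cdiv, Cmult, Cinv, Cnorm2, RtoC; simpl. f_equal; field; repeat split; lra.
Qed.

Lemma Cnorm2_real (r : R) (S : Cplx) : Cnorm2 (Cmult (RtoC r) S) = r ^ 2 * Cnorm2 S.
Proof. destruct S; unfold Cnorm2, Cmult, RtoC; simpl; ring. Qed.

Lemma Cnorm2_pos (S : Cplx) : S <> C0 -> 0 < Cnorm2 S.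
Proof.
  destruct S as [x y]; intros HS; unfold Cnorm2; simpl.
  destruct (Req_dec x 0); destruct (Req_dec y 0); subst; try (exfalso; apply HS; reflexivity); nra.
Qed.

Theorem mainTheorem8
  (N M : nat) (A : nat -> bool) (alpha : nat -> nat -> Cplx) (theta : R) (y : nat)
  (hN : (2 <= N)%nat)
  (hA : card_below N A = M)
  (hM1 : (1 <= M)%nat) (hMN : (M < N)%nat)
  (hU : unitary N (Umat N alpha))
  (htheta : 0 < theta < PI / 2)
  (hsin : sin theta = sqrt (INR M / INR N))
  (hy : (y < N)%nat)
  (hsum0 : Csum N (fun z => alpha y z) = C0)
  (hsumA : Csum N (fun z => if A z then alpha y z else C0) <> C0) :
  let k := kk theta in
  let Upsi := apply N (Umat N alpha) (psi_k N M A theta k) y in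
  let Uxi := apply N (Umat N alpha) (xi N A) y in
  let ratio := Cnorm2 Upsi / Cnorm2 Uxi in
  Cdiv Upsi Uxi = RtoC (- (INR N / (2 * INR M)) * tan theta * sin (2 * INR k * theta)) /\
  ratio = (INR N ^ 2 / (4 * INR M ^ 2)) * (tan theta) ^ 2 * (sin (2 * INR k * theta)) ^ 2 /\
  (2 * INR M <= INR N ->
     INR N / (4 * INR M) * (INR N / INR (N - M)) * (1 - 2 * INR M / INR N) ^ 2 <= ratio /\
     ratio <= INR N / (4 * INR M) * (INR N / INR (N - M))).
Proof.
  intros k Upsi Uxi ratio.
  assert (h0 : Csum N (alpha y) = C0) by exact hsum0.
  set (S := Csum N (fun z => if A z then alpha y z else C0)).
  set (c := / sqrt (INR N)).
  set (a := a_k M theta k). set (b := b_k N M theta k).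
  assert (EUpsi : Upsi = Cmult (RtoC (c * (a - b))) S).
  { unfold Upsi, apply, psi_k, Umat. rewrite Csum_lin. fold c S. rewrite h0.
    unfold Cmult, Cplus, RtoC, C0; simpl; destruct S; simpl; f_equal; unfold a, b; ring. }
  assert (EUxi : Uxi = Cmult (RtoC (c * (-2 * c))) S).
  { unfold Uxi, apply, Umat.
    rewrite (Csum_ext N _ (fun z => Cmult (Cmult (RtoC (/ sqrt (INR N))) (alpha y z))
                 (RtoC (if A z then - c else c)))).
    2:{ intros z. unfold xi. fold c. unfold Defs.ind. destruct (A z); simpl; do 2 f_equal; ring. }
    rewrite Csum_lin. fold c S. rewrite h0.
    unfold Cmult, Cplus, RtoC, C0; simpl; destruct S; simpl; f_equal; ring. }
  assert (HN : 2 <= INR N) by (replace 2 with (INR 2) by (simpl; ring); apply le_INR; exact hN).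
  assert (HM : 1 <= INR M) by (replace 1 with (INR 1) by (simpl; ring); apply le_INR; exact hM1).
  assert (HMN : INR M < INR N) by (apply lt_INR; exact hMN).
  assert (HNM : INR (N - M) = INR N - INR M) by (apply minus_INR; lia).
  set (sN := sqrt (INR N)).
  assert (sNpos : 0 < sN) by (apply sqrt_lt_R0; lra).
  assert (sN2 : sN * sN = INR N) by (apply sqrt_sqrt; lra).
  set (st := sin theta). set (ct := cos theta).
  assert (stpos : 0 < st) by (apply sin_gt_0; lra).
  assert (ctpos : 0 < ct) by (apply cos_gt_0; lra).
  assert (Hsc : st * st + ct * ct = 1) by (pose proof (sin2_cos2 theta); unfold Rsqr in *; fold st ct in H; lra).
  assert (HMst : INR M = st * st * INR N).
  { unfold st; rewrite hsin, sqrt_sqrt. field. lra.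
    unfold Rdiv; apply Rmult_le_pos; [lra| left; apply Rinv_0_lt_compat; lra]. }
  assert (sM : sqrt (INR M) = st * sN).
  { rewrite HMst, sqrt_mult by nra. rewrite sqrt_square by lra. reflexivity. }
  assert (sNM : sqrt (INR (N - M)) = ct * sN).
  { rewrite HNM. replace (INR N - INR M) with ((ct * sN) * (ct * sN)) by (rewrite HMst; nra).
    apply sqrt_square. nra. }
  set (u := 2 * INR k * theta).
  assert (Hab : a - b = sin u / (st * ct * sN)).
  { unfold a, b, a_k, b_k. rewrite sM, sNM.
    replace ((2 * INR k + 1) * theta) with (u + theta) by (unfold u; ring).
    rewrite sin_plus, cos_plus. fold st ct.
    replace (sin u / (st * ct * sN)) with (sin u * (st * st + ct * ct) / (st * ct * sN)) by (rewrite Hsc; field; repeat split; lra).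
    field. repeat split; lra. }
  assert (Srs : Cdiv Upsi Uxi = RtoC (- sin u / (2 * st * ct))).
  { rewrite EUpsi, EUxi, Cdiv_real; auto.
    - f_equal. rewrite Hab. unfold c. fold sN. field. repeat split; lra.
    - unfold c. fold sN. apply Rmult_integral_contrapositive; split.
      + apply Rinv_neq_0_compat; lra.
      + apply Rmult_integral_contrapositive; split; [lra| apply Rinv_neq_0_compat; lra]. }
  assert (Hval : - sin u / (2 * st * ct) = - (INR N / (2 * INR M)) * tan theta * sin u).
  { unfold tan; fold st ct. rewrite HMst. field. repeat split; lra. }
  assert (Hratio : ratio = (sin u / (2 * st * ct)) ^ 2).
  { unfold ratio. rewrite EUpsi, EUxi, !Cnorm2_real.
    pose proof (Cnorm2_pos S hsumA). rewrite Hab. unfold c; fold sN. field.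
    repeat split; lra. }
  split; [rewrite Srs, Hval; reflexivity|].
  split.
  { rewrite Hratio. replace (sin u / (2 * st * ct)) with (- (- sin u / (2 * st * ct))) by (field; lra).
    rewrite Hval. field. lra. }
  intros H2M.
  assert (Ebound : INR N / (4 * INR M) * (INR N / INR (N - M)) = / (2 * st * ct) ^ 2).
  { rewrite HNM, HMst. replace (INR N - st * st * INR N) with (ct * ct * INR N) by nra.
    field. repeat split; lra. }
  assert (E2 : 1 - 2 * INR M / INR N = ct * ct - st * st).
  { rewrite HMst. field_simplify; [nra | lra]. }
  rewrite Ebound, E2, Hratio.
  assert (Hpos : 0 < / (2 * st * ct) ^ 2).
  { apply Rinv_0_lt_compat. apply pow_lt. nra. }
  replace ((sin u / (2 * st * ct)) ^ 2) with (/ (2 * st * ct) ^ 2 * (sin u) ^ 2)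
    by (field; split; lra).
  assert (Hk : 2 * INR k * theta <= PI / 2 /\ PI / 2 - 2 * theta < 2 * INR k * theta).
  { unfold k, kk. set (r := PI / (4 * theta)).
    destruct (base_Int_part r) as [H1 H2].
    assert (rpos : 0 < r) by (unfold r; apply Rdiv_lt_0_compat; [apply PI_RGT_0| lra]).
    assert (Hz : (0 <= Int_part r)%Z).
    { apply le_IZR. assert (IZR (Int_part r) > -1) by lra.
      destruct (Z_lt_le_dec (Int_part r) 0) as [Hl|Hl]; [|apply IZR_le in Hl; lra].
      apply Z.lt_le_pred in Hl. apply IZR_le in Hl. simpl in Hl. lra. }
    rewrite INR_IZR_INZ, Z2Nat.id by exact Hz.
    assert (Hr : r * (4 * theta) = PI) by (unfold r; field; lra).
    split; nra. }
  fold u in Hk.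
  assert (Hs1 : sin u <= 1) by apply SIN_bound.
  assert (Hc2 : 0 <= ct * ct - st * st) by (rewrite HMst in H2M; nra).
  assert (Hs0 : ct * ct - st * st <= sin u).
  { replace (ct * ct - st * st) with (sin (PI / 2 - 2 * theta)).
    - apply sin_incr_1; lra.
    - rewrite sin_shift, cos_2a. reflexivity. }
  assert (Hsb : sin u ^ 2 <= 1) by (pose proof (SIN_bound u); nra).
  split.
  - apply Rmult_le_compat_l; [lra|]. nra.
  - nra.
Qed.
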